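(* Let $(A,+,\circ)$ be a left brace which has a transitive cycle base, let $g$ be an element of a transitive cycle base of $A$, and let $(A,\bullet)$ be the cycle set given by $a\bullet b:=\lambda_a(g)^{-}\circ b$ for all $a,b\in A$. Let $H:=\{h\in A\mid \lambda_h(g)=g\}$. Then $H$ is a subgroup of $(A,\circ)$, the retraction $\mathrm{Ret}(A,\bullet)$ coincides with the set $A/H$ of left cosets $a\circ H$ (i.e. $\sigma_a=\sigma_b$ in $(A,\bullet)$ if and only if $a^{-}\circ b\in H$), and $\mathrm{Soc}(A)\subseteq H$.
   Context: A left brace is a set $A$ with two operations such that $(A,+)$ is an abelian group, $(A,\circ)$ is a group, and $a\circ(b+c)=a\circ b-a+a\circ c$ for all $a,b,c$. For $a\in A$, $\lambda_a(b):=-a+a\circ b$; each $\lambda_a$ is an automorphism of $(A,+)$ and $a\mapsto\lambda_a$ is a homomorphism $(A,\circ)\to\mathrm{Aut}(A,+)$. $a^{-}$ denotes the inverse of $a$ in $(A,\circ)$. $\mathrm{Soc}(A):=\{a\in A\mid \lambda_a=\mathrm{id}_A\}$. A transitive cycle base is a subset of $A$ which is a single orbit of the action $\lambda$ of $(A,\circ)$ on $A$ and which generates $(A,+)$. A cycle set is a set $X$ with a binary operation such that each left multiplication $\sigma_x:y\mapsto x\cdot y$ is bijective and $(x\cdot y)\cdot(x\cdot z)=(y\cdot x)\cdot(y\cdot z)$; the retraction $\mathrm{Ret}(X)$ is the quotient of $X$ by the equivalence $x\sim y\iff\sigma_x=\sigma_y$. *)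

(* Defs.v *)
From mathcomp Require Import all_boot all_algebra.
Set Implicit Arguments. Unset Strict Implicit. Unset Printing Implicit Defensive.
Import GRing.Theory.
Local Open Scope ring_scope.

Section Brace.
Variable A : zmodType.
Variables (circ : A -> A -> A) (e : A) (inv : A -> A).

Definition is_left_brace : Prop :=
  [/\ (forall a b c, circ a (circ b c) = circ (circ a b) c),
      (forall a, circ e a = a /\ circ a e = a),
      (forall a, circ (inv a) a = e /\ circ a (inv a) = e) &
      (forall a b c, circ a (b + c) = circ a b - a + circ a c)].

Definition lam (a b : A) : A := - a + circ a b.

Definition add_subgroup (S : A -> Prop) : Prop :=
  S 0 /\ (forall x y, S x -> S y -> S (x - y)).

Definition generates_add (X : A -> Prop) : Prop :=
  forall S, add_subgroup S -> (forall x, X x -> S x) -> forall a, S a.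

Definition lambda_orbit (X : A -> Prop) : Prop :=
  exists x0, forall y, X y <-> exists a, lam a x0 = y.

Definition transitive_cycle_base (X : A -> Prop) : Prop :=
  lambda_orbit X /\ generates_add X.

Definition circ_subgroup (H : A -> Prop) : Prop :=
  [/\ H e, (forall x y, H x -> H y -> H (circ x y)) &
      (forall x, H x -> H (inv x))].

Definition socle (a : A) : Prop := forall b, lam a b = b.

Definition bullet (g a b : A) : A := circ (inv (lam a g)) b.

End Brace.

(* Main.v *)
Require Import Defs.
From mathcomp Require Import all_boot all_algebra.
Import GRing.Theory.
Local Open Scope ring_scope.

Theorem mainTheorem1 (A : zmodType) (circ : A -> A -> A) (e : A) (inv : A -> A) :
  is_left_brace circ e inv ->
  forall (X : A -> Prop) (g : A),
    transitive_cycle_base circ X -> X g ->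
    let H := fun h : A => lam circ h g = g in
    [/\ circ_subgroup circ e inv H,
        (forall a b : A,
            bullet circ inv g a = bullet circ inv g b <-> H (circ (inv a) b)) &
        (forall a : A, socle circ a -> H a)].
Proof.
case=> assoc idl invl br X g _ _ H.
have c0 : forall a, circ a 0 = a.
  move=> a; have := br a 0 0; rewrite addr0 => h.
  have := congr1 (fun t => t - circ a 0) h; rewrite addrK subrr => h2.
  exact/subr0_eq/esym.
have e0 : e = 0 by rewrite -(c0 e); case: (idl 0).
have lamD : forall a b c, lam circ a (b + c) = lam circ a b + lam circ a c.
  by move=> a b c; rewrite /lam br !addrA.
have lam0 : forall a, lam circ a 0 = 0 by move=> a; rewrite /lam c0 addNr.
have lamN : forall a x, lam circ a (- x) = - lam circ a x.
  move=> a x; apply/esym/addr0_eq; by rewrite -lamD subrr lam0.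
have lamM : forall a b c, lam circ (circ a b) c = lam circ a (lam circ b c).
  move=> a b c; rewrite [lam circ b c]/lam lamD lamN /lam assoc opprD opprK.
  by rewrite addrA (addrAC a) subrr add0r.
have lame : forall c, lam circ e c = c.
  by move=> c; rewrite /lam; case: (idl c) => -> _; rewrite e0 oppr0 add0r.
have invinj : forall x y, inv x = inv y -> x = y.
  move=> x y hxy.
  have [_ hx] := idl x.
  have [_ hy] := invl y.
  have [hx' _] := invl x.
  by rewrite -(proj1 (idl x)) -hy -assoc -hxy hx' (proj2 (idl y)).
split.
- split.
  + exact: lame.
  + by move=> x y hx hy; rewrite /H lamM hy hx.
  + move=> x hx; rewrite /H -{1}hx -lamM; case: (invl x) => -> _; exact: lame.
- move=> a b; rewrite /bullet /H; split.
  + move=> hab.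
    have hab' : lam circ a g = lam circ b g.
      apply: invinj.
      have := congr1 (fun f => f e) hab => /=.
      by rewrite (proj2 (idl _)) (proj2 (idl _)).
    by rewrite lamM -hab' -lamM (proj1 (invl a)) lame.
  + move=> h.
    have hab' : lam circ a g = lam circ b g.
      by rewrite -{1}h -lamM assoc (proj2 (invl a)) (proj1 (idl b)).
    by rewrite hab'.
- by move=> a ha; apply: ha.
Qed.
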